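(* Let $M$ be a $3$-connected simple matroid with $r(M)\ge 4$, and let $K=x_1,\dots,x_n,y_1,\dots,y_n$ ($n\ge3$) be a carambole of $M$ with filament $L=\{y_1,\dots,y_n\}$. Then $M/L$ is $3$-connected. In particular, every triangle of $M$ that meets $\{x_1,\dots,x_n,y_1,\dots,y_n\}$ is contained in $L$.
   Context: A line of $M$ is a rank-$2$ set. For $n\ge3$, a sequence $x_1,\dots,x_n,y_1,\dots,y_n$ of elements of $M$ is a carambole of $M$ if $L:=\{y_1,\dots,y_n\}$ is a line of $M$ with $n$ distinct elements such that $\mathrm{si}(M/L)$ (the simplification) is $3$-connected, and, for each $i$, $(L-y_i)\cup x_i$ is a cocircuit of $M$. $L$ is called the filament of the carambole. *)

(* Defs.v *)
(* Matroids on a finite ground set E : {set T}, given by a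
   rank function r : {set T} -> nat (only its values on subsets of E matter). *)
From mathcomp Require Import ssreflect ssrfun ssrbool eqtype ssrnat seq choice fintype finfun bigop finset.
Set Implicit Arguments. Unset Strict Implicit. Unset Printing Implicit Defensive.

Section Matroids.
Variable T : finType.

Definition is_matroid (E : {set T}) (r : {set T} -> nat) : Prop :=
  [/\ (forall X : {set T}, X \subset E -> r X <= #|X|),
      (forall X Y : {set T}, X \subset Y -> Y \subset E -> r X <= r Y) &
      (forall X Y : {set T}, X \subset E -> Y \subset E ->
         r (X :|: Y) + r (X :&: Y) <= r X + r Y)].

(* contraction M/L : ground set E \ L, rank X |-> r(X u L) - r(L) *)
Definition contract (r : {set T} -> nat) (L : {set T}) : {set T} -> nat :=
  fun X => r (X :|: L) - r L.

Definition dual_rank (E : {set T}) (r : {set T} -> nat) : {set T} -> nat :=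
  fun X => #|X| + r (E :\: X) - r E.

Definition indep (r : {set T} -> nat) (X : {set T}) : bool := r X == #|X|.

Definition circuit (E : {set T}) (r : {set T} -> nat) (C : {set T}) : Prop :=
  [/\ C \subset E, ~~ indep r C &
      forall D : {set T}, D \proper C -> indep r D].

Definition cocircuit (E : {set T}) (r : {set T} -> nat) (C : {set T}) : Prop :=
  circuit E (dual_rank E r) C.

Definition triangle (E : {set T}) (r : {set T} -> nat) (C : {set T}) : Prop :=
  circuit E r C /\ #|C| = 3.

Definition simple (E : {set T}) (r : {set T} -> nat) : Prop :=
  (forall x, x \in E -> r [set x] = 1) /\
  (forall x y, x \in E -> y \in E -> x != y -> r [set x; y] = 2).

(* Tutte connectivity: no k-separation for k = 1, 2.
   A k-separation is (X, E\X) with |X|,|E\X| >= k and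
   r(X) + r(E\X) - r(E) <= k - 1. *)
Definition three_connected (E : {set T}) (r : {set T} -> nat) : Prop :=
  forall (k : nat) (X : {set T}), 1 <= k <= 2 -> X \subset E ->
    ~ [/\ k <= #|X|, k <= #|E :\: X| & r X + r (E :\: X) < r E + k].

(* simplification: delete loops and keep, from each parallel class, the
   element of least enum_rank (a canonical choice; si is unique up to
   isomorphism).  si(M) is the restriction of M to this set. *)
Definition simp_ground (E : {set T}) (r : {set T} -> nat) : {set T} :=
  [set x in E | (r [set x] != 0) &&
     [forall y in E, ((r [set y] != 0) && (r [set x; y] == 1)) ==>
                      (enum_rank x <= enum_rank y)]].

Definition si_three_connected (E : {set T}) (r : {set T} -> nat) : Prop :=
  three_connected (simp_ground E r) r.

Definition line (E : {set T}) (r : {set T} -> nat) (L : {set T}) : Prop :=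
  L \subset E /\ r L = 2.

Definition filament (n : nat) (y : 'I_n -> T) : {set T} := [set y i | i : 'I_n].

Definition carambole (E : {set T}) (r : {set T} -> nat) (n : nat)
    (x y : 'I_n -> T) : Prop :=
  let L := filament y in
  [/\ 3 <= n,
      (forall i, x i \in E) /\ (forall i, y i \in E),
      injective y /\
      line E r L,
      si_three_connected (E :\: L) (contract r L) &
      forall i, cocircuit E r ((L :\ y i) :|: [set x i])].

End Matroids.

(* Main.v *)
Require Import Defs.
From mathcomp Require Import ssreflect ssrfun ssrbool eqtype ssrnat seq choice fintype finfun bigop finset.
From mathcomp Require Import zify.
Set Implicit Arguments. Unset Strict Implicit.

Ltac clean := repeat match goal with H : ?P |- _ =>
  lazymatch P with is_true (leq _ _) => fail | @eq _ _ _ => fail | _ => clear H end end.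

Lemma rmono (T : finType) (E : {set T}) (r : {set T} -> nat) (hM : is_matroid E r)
  (X Y : {set T}) : X \subset Y -> Y \subset E -> r X <= r Y.
Proof. by case: hM => _ h _; apply: h. Qed.

Lemma rsub (T : finType) (E : {set T}) (r : {set T} -> nat) (hM : is_matroid E r)
  (X Y : {set T}) : X \subset E -> Y \subset E -> r (X :|: Y) + r (X :&: Y) <= r X + r Y.
Proof. by case: hM => _ _ h; apply: h. Qed.

Lemma rcard (T : finType) (E : {set T}) (r : {set T} -> nat) (hM : is_matroid E r)
  (X : {set T}) : X \subset E -> r X <= #|X|.
Proof. by case: hM => h _ _; apply: h. Qed.

Lemma radd1 (T : finType) (E : {set T}) (r : {set T} -> nat) (hM : is_matroid E r)
  (X : {set T}) a : X \subset E -> a \in E -> r (a |: X) <= r X + 1.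
Proof.
move=> hX ha.
have ha' : [set a] \subset E by rewrite sub1set.
have := rsub hM ha' hX. have := rcard hM ha'. rewrite cards1. lia.
Qed.

Lemma transfer (T : finType) (E : {set T}) (r : {set T} -> nat) (hM : is_matroid E r)
  (A B : {set T}) a : B \subset E -> A \subset B -> a \in E -> r (a |: A) <= r A -> r (a |: B) <= r B.
Proof.
move=> hB hAB ha h.
have hA : A \subset E := subset_trans hAB hB.
have hX : a |: A \subset E by rewrite subUset sub1set ha hA.
have := rsub hM hX hB.
have h1 : r (a |: B) <= r ((a |: A) :|: B).
  apply: (rmono hM); first by rewrite -setUA (setUidPr hAB) subxx.
  by rewrite subUset hX hB.
have h2 : r A <= r ((a |: A) :&: B).
  apply: (rmono hM); first by rewrite subsetI hAB subsetUr.
  by rewrite subIset // hB orbT.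
lia.
Qed.

Lemma compl_rank (T : finType) (E : {set T}) (r : {set T} -> nat) (hM : is_matroid E r)
  (X : {set T}) : X \subset E -> r E <= r X + r (E :\: X).
Proof.
move=> hX. have := rsub hM hX (subsetDl E X).
have -> : X :|: E :\: X = E.
  apply/setP => z; rewrite !inE; case hz: (z \in X) => //=.
  by rewrite (subsetP hX z hz).
have -> : X :&: (E :\: X) = set0.
  by apply/setP => z; rewrite !inE; case: (z \in X); rewrite ?andbF.
have := rcard hM (sub0set E). rewrite cards0. lia.
Qed.

Lemma sep0 (T : finType) (E : {set T}) (r : {set T} -> nat)
  (h3 : three_connected E r) (X : {set T}) : X \subset E -> 2 <= #|X| -> 2 <= #|E :\: X| ->
  r X + r (E :\: X) <= r E + 1 -> False.
Proof. move=> hX h1 h2 h; apply: (h3 2 X) => //; split => //; lia. Qed.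

Lemma sep (T : finType) (E : {set T}) (r : {set T} -> nat) (hM : is_matroid E r)
  (h3 : three_connected E r) (X : {set T}) : X \subset E -> 2 <= #|X| -> 2 <= r (E :\: X) ->
  r X + r (E :\: X) <= r E + 1 -> False.
Proof.
move=> hX h1 h2 h; apply: (sep0 h3 hX h1) => //.
have := rcard hM (subsetDl E X); lia.
Qed.

Lemma cocirc (T : finType) (E : {set T}) (r : {set T} -> nat) (hM : is_matroid E r)
  (D : {set T}) : cocircuit E r D -> 2 <= #|D| ->
  r (E :\: D) + 1 = r E /\ forall d, d \in D -> r (d |: (E :\: D)) = r E.
Proof.
case=> hDE hni hmin hD2.
have hle : forall X, r (E :\: X) <= r E.
  by move=> X; apply: (rmono hM); rewrite ?subsetDl ?subxx.
have hall : forall d, d \in D -> r (d |: (E :\: D)) = r E.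
  move=> d hd.
  have hp : D :\ d \proper D by rewrite properD1.
  have heq : E :\: (D :\ d) = d |: (E :\: D).
    apply/setP => z; rewrite !inE.
    case: (z =P d) => [->|] /=; first by rewrite (subsetP hDE).
    by [].
  have := hmin _ hp. rewrite /indep /dual_rank => /eqP.
  have : 2 <= #|D :\ d| + 1 by rewrite (cardsD1 d D) hd in hD2; lia.
  have := hle (D :\ d).
  rewrite heq. lia.
split=> //.
have /set0Pn [d hd] : D != set0 by rewrite -card_gt0; lia.
have := hall d hd.
have := radd1 hM (subsetDl E D) (subsetP hDE d hd).
move: hni; rewrite /indep /dual_rank => /eqP.
have := hle D. lia.
Qed.

Lemma Lfacts (T : finType) (E : {set T}) (r : {set T} -> nat) (hM : is_matroid E r) (h3 : three_connected E r) (hs : simple E r) (hr : 4 <= r E) (n : nat) (x y : 'I_n -> T) (hK : carambole E r x y) :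
  [/\ filament y \subset E, r (filament y) = 2, #|filament y| = n, 3 <= n &
      forall i, y i \in filament y].
Proof.
case: hK => hn [hx hy] [hinj [hLE hL2]] _ _.
split=> //; first by rewrite card_imset // card_ord.
by move=> i; rewrite mem_imset.
Qed.

Lemma Dcard (T : finType) (E : {set T}) (r : {set T} -> nat) (hM : is_matroid E r) (h3 : three_connected E r) (hs : simple E r) (hr : 4 <= r E) (n : nat) (x y : 'I_n -> T) (hK : carambole E r x y) i : 2 <= #|(filament y :\ y i) :|: [set x i]|.
Proof.
have [_ _ hc hn hyL] := Lfacts hM h3 hs hr hK.
have := subset_leq_card (subsetUl (filament y :\ y i) [set x i]).
move: hc; rewrite (cardsD1 (y i)) hyL. clean; lia.
Qed.

Lemma cocD (T : finType) (E : {set T}) (r : {set T} -> nat) (hM : is_matroid E r) (h3 : three_connected E r) (hs : simple E r) (hr : 4 <= r E) (n : nat) (x y : 'I_n -> T) (hK : carambole E r x y) i :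
  r (E :\: ((filament y :\ y i) :|: [set x i])) + 1 = r E /\
  forall d, d \in (filament y :\ y i) :|: [set x i] ->
     r (d |: (E :\: ((filament y :\ y i) :|: [set x i]))) = r E.
Proof.
apply: (cocirc hM); last exact: (Dcard hM h3 hs hr hK).
by case: hK => _ _ _ _; apply.
Qed.

Lemma memH (T : finType) (E : {set T}) (r : {set T} -> nat) (hM : is_matroid E r) (h3 : three_connected E r) (hs : simple E r) (hr : 4 <= r E) (n : nat) (x y : 'I_n -> T) (hK : carambole E r x y) i z : z \in E -> z \notin filament y -> z != x i ->
  z \in E :\: ((filament y :\ y i) :|: [set x i]).
Proof. by move=> hz hL hx; rewrite !inE hz (negbTE hL) (negbTE hx) andbF. Qed.

Lemma yH (T : finType) (E : {set T}) (r : {set T} -> nat) (hM : is_matroid E r) (h3 : three_connected E r) (hs : simple E r) (hr : 4 <= r E) (n : nat) (x y : 'I_n -> T) (hK : carambole E r x y) i : x i != y i -> y i \in E :\: ((filament y :\ y i) :|: [set x i]).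
Proof.
have [hLE _ _ _ hyL] := Lfacts hM h3 hs hr hK.
move=> hne; rewrite !inE eqxx /= eq_sym (negbTE hne) (subsetP hLE) //.
Qed.

Lemma yD (T : finType) (E : {set T}) (r : {set T} -> nat) (hM : is_matroid E r) (h3 : three_connected E r) (hs : simple E r) (hr : 4 <= r E) (n : nat) (x y : 'I_n -> T) (hK : carambole E r x y) i j : j != i -> y j \in (filament y :\ y i) :|: [set x i].
Proof.
have [hLE _ _ _ hyL] := Lfacts hM h3 hs hr hK.
case: hK => _ _ [hinj _] _ _.
move=> hne; rewrite !inE hyL andbT.
by rewrite (inj_eq hinj) hne.
Qed.

Lemma xD (T : finType) (E : {set T}) (r : {set T} -> nat) (hM : is_matroid E r) (h3 : three_connected E r) (hs : simple E r) (hr : 4 <= r E) (n : nat) (x y : 'I_n -> T) (hK : carambole E r x y) i : x i \in (filament y :\ y i) :|: [set x i].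
Proof. by rewrite !inE eqxx orbT. Qed.

Lemma xnotL (T : finType) (E : {set T}) (r : {set T} -> nat) (hM : is_matroid E r) (h3 : three_connected E r) (hs : simple E r) (hr : 4 <= r E) (n : nat) (x y : 'I_n -> T) (hK : carambole E r x y) i : x i \notin filament y.
Proof.
have [hLE hL2 hc hn hyL] := Lfacts hM h3 hs hr hK.
have [hH _] := cocD hM h3 hs hr hK i.
apply/negP => hxL.
have hsub : E :\: filament y \subset E :\: ((filament y :\ y i) :|: [set x i]).
  apply/subsetP => z; rewrite inE => /andP [hz hzE].
  apply: (memH hM h3 hs hr hK) => //.
  by apply/eqP => hzx; rewrite hzx hxL in hz.
have h1 := rmono hM hsub (subsetDl _ _).
have h2 := compl_rank hM hLE.
apply: (sep hM h3 hLE); clean; lia.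
Qed.

Lemma xneqy (T : finType) (E : {set T}) (r : {set T} -> nat) (hM : is_matroid E r) (h3 : three_connected E r) (hs : simple E r) (hr : 4 <= r E) (n : nat) (x y : 'I_n -> T) (hK : carambole E r x y) i : x i != y i.
Proof.
have [hLE hL2 hc hn hyL] := Lfacts hM h3 hs hr hK.
apply/eqP => he; have := xnotL hM h3 hs hr hK i; by rewrite he hyL.
Qed.

Lemma NL (T : finType) (E : {set T}) (r : {set T} -> nat) (hM : is_matroid E r) (h3 : three_connected E r) (hs : simple E r) (hr : 4 <= r E) (n : nat) (x y : 'I_n -> T) (hK : carambole E r x y) e : e \in E -> e \notin filament y -> r (e |: filament y) = 3.
Proof.
move=> heE heL.
have [hLE hL2 hc hn hyL] := Lfacts hM h3 hs hr hK.
have hXE : e |: filament y \subset E by rewrite subUset sub1set heE hLE.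
have h1 := radd1 hM hLE heE.
have h2 := rmono hM (subsetUr [set e] (filament y)) hXE.
suff : ~ r (e |: filament y) <= 2 by clean; lia.
move=> hle.
have n0 : 0 < n by clean; lia.
have n1 : 1 < n by clean; lia.
pose i0 := Ordinal n0. pose i1 := Ordinal n1.
have [hH hHd] := cocD hM h3 hs hr hK i0.
have [hx hy] : (forall i, x i \in E) /\ (forall i, y i \in E) by case: hK.
case: (x i0 =P e) => hxe.
  have hsub : E :\: (e |: filament y) \subset E :\: ((filament y :\ y i0) :|: [set x i0]).
    apply/subsetP => z; rewrite !inE negb_or => /andP [/andP [hze hzL] hz].
    by rewrite hz (negbTE hzL) hxe eq_sym (negbTE hze) andbF.
  have h3' := rmono hM hsub (subsetDl _ _).
  have h4 := compl_rank hM hXE.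
  have h5 := subset_leq_card (subsetUr [set e] (filament y)).
  apply: (sep hM h3 hXE); clean; lia.
have hA : [set e; y i0] \subset E :\: ((filament y :\ y i0) :|: [set x i0]).
  rewrite subUset !sub1set (yH hM h3 hs hr hK (xneqy hM h3 hs hr hK i0)) andbT.
  apply: (memH hM h3 hs hr hK) => //; exact/eqP/nesym.
have hne : e != y i0 by apply/eqP => he; rewrite he hyL in heL.
have hrA : r [set e; y i0] = 2 by case: hs => _ h; apply: h.
have hyD := hHd _ (yD hM h3 hs hr hK (i:=i0) (j:=i1) isT).
have htr : r (y i1 |: [set e; y i0]) <= r [set e; y i0].
  rewrite hrA; apply: leq_trans hle; apply: (rmono hM) => //.
  by rewrite !subUset !sub1set !inE !hyL eqxx !orbT.
have := transfer hM (subsetDl _ _) hA (hy i1) htr.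
clean; lia.
Qed.

Lemma pairG (T : finType) (E : {set T}) (r : {set T} -> nat) (hM : is_matroid E r) (h3 : three_connected E r) (hs : simple E r) (hr : 4 <= r E) (n : nat) (x y : 'I_n -> T) (hK : carambole E r x y) i j (G : {set T}) : i != j ->
  G \subset E :\: ((filament y :\ y i) :|: [set x i]) ->
  G \subset E :\: ((filament y :\ y j) :|: [set x j]) ->
  r E <= r G + 1 -> False.
Proof.
move=> hij hGi hGj hG.
have hy : forall i, y i \in E by case: hK => _ [] _ hy.
have [hHi hHid] := cocD hM h3 hs hr hK i.
have [hHj _] := cocD hM h3 hs hr hK j.
have h1 := rmono hM hGj (subsetDl _ _).
have hyj := yH hM h3 hs hr hK (xneqy hM h3 hs hr hK j).
have h2 : r (y j |: G) <= r G.
  have := rmono hM (_ : y j |: G \subset _) (subsetDl _ _).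
  move=> /(_ ((filament y :\ y j) :|: [set x j])).
  by rewrite subUset sub1set hyj hGj => /(_ isT); clean; lia.
have := transfer hM (subsetDl _ _) hGi (hy j) h2.
rewrite hHid; first by clean; lia.
by apply: (yD hM h3 hs hr hK); rewrite eq_sym.
Qed.

Lemma xdist (T : finType) (E : {set T}) (r : {set T} -> nat) (hM : is_matroid E r) (h3 : three_connected E r) (hs : simple E r) (hr : 4 <= r E) (n : nat) (x y : 'I_n -> T) (hK : carambole E r x y) i j e : i != j -> e \in E -> e \notin filament y -> x i = e -> x j = e -> False.
Proof.
move=> hij heE heL hxi hxj.
have [hLE hL2 hc hn hyL] := Lfacts hM h3 hs hr hK.
have hy : forall i, y i \in E by case: hK => _ [] _ hy.
have hXE : e |: filament y \subset E by rewrite subUset sub1set heE hLE.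
have hFk : forall k, x k = e -> E :\: (e |: filament y) \subset E :\: ((filament y :\ y k) :|: [set x k]).
  move=> k hk; apply/subsetP => z; rewrite !inE negb_or => /andP [/andP [hze hzL] hz].
  by rewrite hz (negbTE hzL) hk eq_sym (negbTE hze) andbF.
have hF : r (E :\: (e |: filament y)) + 2 <= r E.
  suff : ~ r E <= r (E :\: (e |: filament y)) + 1 by clean; lia.
  exact: (pairG hM h3 hs hr hK hij (hFk i hxi) (hFk j hxj)).
have [hHi _] := cocD hM h3 hs hr hK i.
have hHsub : E :\: ((filament y :\ y i) :|: [set x i]) \subset y i |: (E :\: (e |: filament y)).
  apply/subsetP => z; rewrite !inE hxi negb_or => /andP [/andP [/negP hz1 hz2] hz].
  case: (z =P y i) => //= hzy.
  rewrite hz negb_or hz2 /=.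
  rewrite andbT; apply/negP => hzL; apply: hz1; rewrite hzL andbT; exact/eqP.
have h1 := rmono hM hHsub.
have h2 := radd1 hM (subsetDl E (e |: filament y)) (hy i).
have h3' := radd1 hM hLE heE.
have h5 := subset_leq_card (subsetUr [set e] (filament y)).
have h6 : y i |: (E :\: (e |: filament y)) \subset E by rewrite subUset sub1set hy subsetDl.
have := h1 h6.
move=> h7.
apply: (sep hM h3 hXE); clean; lia.
Qed.

Lemma tri_small (T : finType) (E : {set T}) (r : {set T} -> nat) (hM : is_matroid E r) (h3 : three_connected E r) (hs : simple E r) (hr : 4 <= r E) (n : nat) (x y : 'I_n -> T) (hK : carambole E r x y) i j e f : i != j -> e \in E -> f \in E ->
  e \notin filament y -> f \notin filament y ->
  r ([set e; f] :|: filament y) <= 3 -> x i != e -> x i != f ->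
  r [set e; f; y i] <= 2.
Proof.
move=> hij heE hfE heL hfL hS hxe hxf.
have [hLE hL2 hc hn hyL] := Lfacts hM h3 hs hr hK.
have hy : forall i, y i \in E by case: hK => _ [] _ hy.
have [hHi hHid] := cocD hM h3 hs hr hK i.
have hA : [set e; f; y i] \subset E :\: ((filament y :\ y i) :|: [set x i]).
  rewrite !subUset !sub1set (yH hM h3 hs hr hK (xneqy hM h3 hs hr hK i)) andbT.
  by rewrite !(memH hM h3 hs hr hK) // eq_sym.
have hAE : [set e; f; y i] \subset E by rewrite !subUset !sub1set heE hfE hy.
have hcard := rcard hM hAE.
have hc3 : #|[set e; f; y i]| <= 3.
  by rewrite -setUA cardsU1 cards2; case: (_ \notin _); case: (_ != _).
suff : ~ 3 <= r [set e; f; y i] by clean; lia.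
move=> h3A.
have htr : r (y j |: [set e; f; y i]) <= r [set e; f; y i].
  apply: leq_trans h3A; apply: leq_trans hS; apply: (rmono hM).
    by rewrite !subUset !sub1set !inE !hyL !eqxx !orbT.
  by rewrite !subUset !sub1set heE hfE hLE.
have := transfer hM (subsetDl _ _) hA (hy j) htr.
rewrite hHid; first by clean; lia.
by apply: (yD hM h3 hs hr hK); rewrite eq_sym.
Qed.

Lemma bad2 (T : finType) (E : {set T}) (r : {set T} -> nat) (hM : is_matroid E r) (h3 : three_connected E r) (hs : simple E r) (hr : 4 <= r E) (n : nat) (x y : 'I_n -> T) (hK : carambole E r x y) i j e f : i != j -> e \in E -> f \in E -> e != f ->
  e \notin filament y -> f \notin filament y ->
  r ([set e; f] :|: filament y) <= 3 -> x i != e -> x i != f ->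
  x j != e -> x j != f -> False.
Proof.
move=> hij heE hfE hef heL hfL hS hie hif hje hjf.
have [hLE hL2 hc hn hyL] := Lfacts hM h3 hs hr hK.
have hy : forall i, y i \in E by case: hK => _ [] _ hy.
have hinj : injective y by case: hK => _ _ [].
have hA := tri_small hM h3 hs hr hK hij heE hfE heL hfL hS hie hif.
have hB := tri_small hM h3 hs hr hK (j:=i) (i:=j) (e:=e) (f:=f) _ heE hfE heL hfL hS hje hjf.
move: hB; rewrite eq_sym => /(_ hij) hB.
have hAE : [set e; f; y i] \subset E by rewrite !subUset !sub1set heE hfE hy.
have hBE : [set e; f; y j] \subset E by rewrite !subUset !sub1set heE hfE hy.
have h1 := rsub hM hAE hBE.
have h2 : r [set e; f] <= r ([set e; f; y i] :&: [set e; f; y j]).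
  apply: (rmono hM); last by apply: subset_trans (subsetIl _ _) hAE.
  by rewrite subsetI !subsetUl.
have hef2 : r [set e; f] = 2 by case: hs => _ h; apply: h.
have hUE : [set e; f; y i] :|: [set e; f; y j] \subset E by rewrite subUset hAE hBE.
have h3' := rsub hM hLE hUE.
have h4 : r [set y i; y j] <= r (filament y :&: ([set e; f; y i] :|: [set e; f; y j])).
  apply: (rmono hM); last by apply: subset_trans (subsetIl _ _) hLE.
  by rewrite subsetI !subUset !sub1set !hyL !inE !eqxx !orbT.
have hyy : r [set y i; y j] = 2.
  case: hs => _ h; apply: h => //. by rewrite (inj_eq hinj).
have h5 : r (e |: filament y) <= r (filament y :|: ([set e; f; y i] :|: [set e; f; y j])).
  apply: (rmono hM); last by rewrite subUset hLE hUE.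
  by rewrite subUset sub1set !inE eqxx /= orbT subsetUl.
have := NL hM h3 hs hr hK heE heL. clear -h1 h2 hef2 hA hB h3' h4 hyy h5 hL2. move=> hh. clean; lia.
Qed.

Lemma ef (T : finType) (E : {set T}) (r : {set T} -> nat) (hM : is_matroid E r) (h3 : three_connected E r) (hs : simple E r) (hr : 4 <= r E) (n : nat) (x y : 'I_n -> T) (hK : carambole E r x y) i j e f : i != j -> e \in E -> f \in E -> e != f ->
  e \notin filament y -> f \notin filament y ->
  r ([set e; f] :|: filament y) <= 3 -> x i = e -> x j = f -> False.
Proof.
move=> hij heE hfE hef heL hfL hS hie hjf.
have [hLE hL2 hc hn hyL] := Lfacts hM h3 hs hr hK.
have hSE : [set e; f] :|: filament y \subset E by rewrite !subUset !sub1set heE hfE hLE.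
have hGk : forall k, x k = e \/ x k = f -> E :\: ([set e; f] :|: filament y) \subset E :\: ((filament y :\ y k) :|: [set x k]).
  move=> k hk; apply/subsetP => z; rewrite !inE !negb_or => /andP [/andP [/andP [hze hzf] hzL] hz].
  rewrite hz (negbTE hzL) /= andbF /=.
  by case: hk => hk; rewrite hk; rewrite andbT; [exact: hze | exact: hzf].
have hG : r (E :\: ([set e; f] :|: filament y)) + 2 <= r E.
  suff : ~ r E <= r (E :\: ([set e; f] :|: filament y)) + 1 by clean; lia.
  exact: (pairG hM h3 hs hr hK hij (hGk i (or_introl hie)) (hGk j (or_intror hjf))).
have hcS : 2 <= #|[set e; f] :|: filament y|.
  apply: leq_trans (subset_leq_card (subsetUr _ _)); clean; lia.
case: (leqP 2 (r (E :\: ([set e; f] :|: filament y)))) => hG2.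
  apply: (sep hM h3 hSE) => //; clean; lia.
have hcomp := compl_rank hM hSE.
set G := E :\: ([set e; f] :|: filament y) in hG hG2 hcomp hGk.
have hXE : e |: filament y \subset E by rewrite subUset sub1set heE hLE.
have hsub : E :\: (e |: filament y) \subset f |: G.
  apply/subsetP => z; rewrite !inE !negb_or => /andP [/andP [hze hzL] hz].
  by rewrite hz hze hzL /= !andbT orbN.
have hGE : G \subset E by apply: subsetDl.
have hfG : f |: G \subset E by rewrite subUset sub1set hfE hGE.
have h1 := rmono hM hsub hfG.
have h2 := radd1 hM hGE hfE.
have hNL := NL hM h3 hs hr hK heE heL.
have hcG := rcard hM hGE.
have hfnG : f \notin G by rewrite !inE !eqxx orbT.
have hsub2 : f |: G \subset E :\: (e |: filament y).
  apply/subsetP => z; rewrite !inE => /orP [/eqP ->|].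
    by rewrite negb_or eq_sym hef hfL hfE.
  by rewrite !negb_or => /andP [/andP [/andP [-> _] ->] ->].
have h3' := subset_leq_card hsub2.
rewrite cardsU1 hfnG in h3'.
have h5 := subset_leq_card (subsetUr [set e] (filament y)).
apply: (sep0 h3 hXE); clean; lia.
Qed.

Lemma NP (T : finType) (E : {set T}) (r : {set T} -> nat) (hM : is_matroid E r) (h3 : three_connected E r) (hs : simple E r) (hr : 4 <= r E) (n : nat) (x y : 'I_n -> T) (hK : carambole E r x y) e f : e \in E -> f \in E -> e != f ->
  e \notin filament y -> f \notin filament y ->
  ~ r ([set e; f] :|: filament y) <= 3.
Proof.
move=> heE hfE hef heL hfL hS.
have [hLE hL2 hc hn hyL] := Lfacts hM h3 hs hr hK.
have W1 : forall a b, (x a == e) = true -> (x b == e) = true -> a != b -> False.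
  by move=> a b /eqP ha /eqP hb hab; apply: (xdist hM h3 hs hr hK hab heE heL ha hb).
have W2 : forall a b, (x a == f) = true -> (x b == f) = true -> a != b -> False.
  by move=> a b /eqP ha /eqP hb hab; apply: (xdist hM h3 hs hr hK hab hfE hfL ha hb).
have W3 : forall a b, (x a == e) = true -> (x b == f) = true -> a != b -> False.
  by move=> a b /eqP ha /eqP hb hab; apply: (ef hM h3 hs hr hK hab heE hfE hef heL hfL hS ha hb).
have W4 : forall a b, (x a == e) = false -> (x a == f) = false ->
    (x b == e) = false -> (x b == f) = false -> a != b -> False.
  move=> a b h1 h2 h3' h4 hab.
  by apply: (bad2 hM h3 hs hr hK hab heE hfE hef heL hfL hS); apply: negbT.
have W5 : forall a, (x a == e) = true -> (x a == f) = true -> False.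
  by move=> a /eqP -> /eqP hf; rewrite hf eqxx in hef.
have n0 : 0 < n by clean; lia.
have n1 : 1 < n by clean; lia.
have n2 : 2 < n by clean; lia.
pose i0 := Ordinal n0. pose i1 := Ordinal n1. pose i2 := Ordinal n2.
case h0e : (x i0 == e); case h0f : (x i0 == f);
case h1e : (x i1 == e); case h1f : (x i1 == f);
case h2e : (x i2 == e); case h2f : (x i2 == f);
  first [ exact: (W5 i0 h0e h0f)
        | exact: (W5 i1 h1e h1f)
        | exact: (W5 i2 h2e h2f)
        | exact: (W1 i0 i1 h0e h1e isT)
        | exact: (W2 i0 i1 h0f h1f isT)
        | exact: (W3 i0 i1 h0e h1f isT)
        | exact: (W4 i0 i1 h0e h0f h1e h1f isT)
        | exact: (W1 i0 i2 h0e h2e isT)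
        | exact: (W2 i0 i2 h0f h2f isT)
        | exact: (W3 i0 i2 h0e h2f isT)
        | exact: (W4 i0 i2 h0e h0f h2e h2f isT)
        | exact: (W1 i1 i0 h1e h0e isT)
        | exact: (W2 i1 i0 h1f h0f isT)
        | exact: (W3 i1 i0 h1e h0f isT)
        | exact: (W4 i1 i0 h1e h1f h0e h0f isT)
        | exact: (W1 i1 i2 h1e h2e isT)
        | exact: (W2 i1 i2 h1f h2f isT)
        | exact: (W3 i1 i2 h1e h2f isT)
        | exact: (W4 i1 i2 h1e h1f h2e h2f isT)
        | exact: (W1 i2 i0 h2e h0e isT)
        | exact: (W2 i2 i0 h2f h0f isT)
        | exact: (W3 i2 i0 h2e h0f isT)
        | exact: (W4 i2 i0 h2e h2f h0e h0f isT)
        | exact: (W1 i2 i1 h2e h1e isT)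
        | exact: (W2 i2 i1 h2f h1f isT)
        | exact: (W3 i2 i1 h2e h1f isT)
        | exact: (W4 i2 i1 h2e h2f h1e h1f isT) ].
Qed.

Lemma simpE (T : finType) (E : {set T}) (r : {set T} -> nat) (hM : is_matroid E r) (h3 : three_connected E r) (hs : simple E r) (hr : 4 <= r E) (n : nat) (x y : 'I_n -> T) (hK : carambole E r x y) :
  simp_ground (E :\: filament y) (contract r (filament y)) = E :\: filament y.
Proof.
have [hLE hL2 hc hn hyL] := Lfacts hM h3 hs hr hK.
apply/setP => z; rewrite /simp_ground inE.
case hz: (z \in E :\: filament y) => //=.
move: hz; rewrite inE => /andP [hzL hzE].
rewrite /contract hL2.
rewrite (NL hM h3 hs hr hK hzE hzL) /=.
apply/forall_inP => w; rewrite inE => /andP [hwL hwE]; apply/implyP => /andP [_ h].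
case: (w =P z) => [->|/eqP hwz]; first by [].
exfalso; move: h => /eqP h.
apply: (NP hM h3 hs hr hK hzE hwE _ hzL hwL); first by rewrite eq_sym.
clean; lia.
Qed.

Lemma triE (T : finType) (E : {set T}) (r : {set T} -> nat) (hM : is_matroid E r) (h3 : three_connected E r) (hs : simple E r) (hr : 4 <= r E) (n : nat) (x y : 'I_n -> T) (hK : carambole E r x y) C i : triangle E r C -> (x i \in C) || (y i \in C) -> C \subset filament y.
Proof.
have [hLE hL2 hc hn hyL] := Lfacts hM h3 hs hr hK.
case=> [[hCE hni hmin] hC3] hi.
have hrC : r C <= 2.
  have := rcard hM hCE; move: hni; rewrite /indep hC3 => /eqP; clean; lia.
apply/negPn/negP => /subsetPn [c hcC hcL].
have hcE : c \in E := subsetP hCE c hcC.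
case: (set_0Vmem (C :&: filament y)) => [hI0|[w hw]].
  have hxC : x i \in C.
    case/orP: hi => // hyC.
    have : y i \in C :&: filament y by rewrite inE hyC hyL.
    by rewrite hI0 inE.
  have [hHi hHid] := cocD hM h3 hs hr hK i.
  have hxE : x i \in E := subsetP hCE _ hxC.
  have hA : C :\ x i \subset E :\: ((filament y :\ y i) :|: [set x i]).
    apply/subsetP => z /setD1P [hzx hzC].
    apply: (memH hM h3 hs hr hK) => //; first exact: subsetP hCE z hzC.
    apply/negP => hzL.
    have : z \in C :&: filament y by rewrite inE hzC hzL.
    by rewrite hI0 inE.
  have hrA : r (C :\ x i) = 2.
    have := hmin _ (properD1 hxC); rewrite /indep => /eqP ->.
    by move: hC3; rewrite (cardsD1 (x i)) hxC; clean; lia.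
  have htr : r (x i |: (C :\ x i)) <= r (C :\ x i) by rewrite setD1K // hrA.
  have := transfer hM (subsetDl _ _) hA hxE htr.
  rewrite hHid; last exact: (xD hM h3 hs hr hK).
  clean; lia.
have hIp : filament y :&: C \proper C.
  rewrite properEneq subsetIr andbT; apply/eqP => he.
  by move: hcC; rewrite -he inE (negbTE hcL).
have hrI : r (filament y :&: C) = #|filament y :&: C|.
  by have := hmin _ hIp; rewrite /indep => /eqP.
have hcI := proper_card hIp.
have hI1 : 0 < #|filament y :&: C|.
  by apply/card_gt0P; exists w; move: hw; rewrite !inE andbC.
have h1 := rsub hM hLE hCE.
have hLCE : filament y :|: C \subset E by rewrite subUset hLE hCE.
have hD : #|C :\: filament y| = 3 - #|filament y :&: C| by rewrite cardsD hC3 setIC.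
case: (ltnP 1 #|filament y :&: C|) => hI2.
  have h2 : r (c |: filament y) <= r (filament y :|: C).
    by apply: (rmono hM) => //; rewrite subUset sub1set !inE hcC orbT subsetUl.
  have := NL hM h3 hs hr hK hcE hcL.
  clean; lia.
have /cards2P [c1 [c2 [h12 hCD]]] : #|C :\: filament y| == 2.
  by rewrite hD; apply/eqP; clean; lia.
have hc1 : c1 \in C :\: filament y by rewrite hCD !inE eqxx.
have hc2 : c2 \in C :\: filament y by rewrite hCD !inE eqxx orbT.
move: hc1 hc2; rewrite !inE => /andP [hc1L hc1C] /andP [hc2L hc2C].
apply: (NP hM h3 hs hr hK (subsetP hCE _ hc1C) (subsetP hCE _ hc2C) h12 hc1L hc2L).
have h2 : r ([set c1; c2] :|: filament y) <= r (filament y :|: C).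
  apply: (rmono hM) => //.
  by rewrite !subUset !sub1set !inE hc1C hc2C !orbT subsetUl.
clean; lia.
Qed.


Theorem corollary4p3 (T : finType) (E : {set T}) (r : {set T} -> nat)
  (hM : is_matroid E r) (h3 : three_connected E r) (hs : simple E r)
  (hr : 4 <= r E) (n : nat) (x y : 'I_n -> T)
  (hK : carambole E r x y) :
  three_connected (E :\: filament y) (contract r (filament y)) /\
  (forall C : {set T}, triangle E r C ->
     (exists i : 'I_n, (x i \in C) || (y i \in C)) ->
     C \subset filament y).
Proof.
split.
  have := simpE hM h3 hs hr hK.
  case: hK => _ _ _ hsi _.
  by move: hsi; rewrite /si_three_connected => + <-.
by move=> C hC [i hi]; apply: (triE hM h3 hs hr hK hC hi).
Qed.
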